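(* Let $G$ be a planar PCC graph, let $v,v'$ be vertices and let $\sigma,\sigma'$ be faces with $\sigma\in F(v)$, $\sigma'\in F(v')$ and $|\sigma|,|\sigma'|\ge 20$. If $v$ and $v'$ are adjacent in $G$, then $\sigma=\sigma'$ and the edge $vv'$ lies on the boundary of $\sigma$ (i.e. $vv'\in E(\sigma)$).
   Context: $G$ is a finite simple connected graph 2-cell embedded in the sphere. For a face $\sigma$, $E(\sigma)$ is the multiset of edges on its boundary walk and $|\sigma|$ is its length; for a vertex $v$, $F(v)$ is the multiset of faces incident to $v$ (one per corner) and $K(v)=1-\frac{\deg(v)}{2}+\sum_{\sigma\in F(v)}\frac1{|\sigma|}$. A prism (resp. antiprism) of order $N$ is the planar graph with $2N$ vertices, two $N$-faces and $N$ quadrilaterals (resp. $2N$ triangles), each vertex incident to two quadrilaterals and one $N$-face (resp. three triangles and one $N$-face). A planar PCC graph is such a $G$ with $K(v)>0$, $\deg(v)\ge3$ for all $v$, not a prism or antiprism. *)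

(* Defs.v *)
(* A graph 2-cell embedded in the sphere is represented by a
   combinatorial map (rotation system) on a finite set of darts D:
   alpha = fixed-point-free involution (reversing a dart),
   sigma = permutation rotating the darts around their tail vertex,
   phi = sigma \o alpha = face permutation (boundary walks).
   Vertices = sigma-orbits, faces = phi-orbits, edges = alpha-orbits.
   Genus 0 (sphere) is imposed via Euler's formula V - E + F = 2. *)
From HB Require Import structures.
From mathcomp Require Import all_boot all_order all_algebra.
Set Implicit Arguments. Unset Strict Implicit. Unset Printing Implicit Defensive.
Import GRing.Theory Num.Theory.

Section Maps.
Variables (D : finType) (alpha sigma : D -> D).

Definition phi (d : D) : D := sigma (alpha d).

Definition vertex_of (d : D) : {set D} := [set x | fconnect sigma d x].
(* the face whose boundary walk traverses the dart d; its darts = E(face) *)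
Definition face_of (d : D) : {set D} := [set x | fconnect phi d x].

Definition vertices : {set {set D}} := [set vertex_of d | d : D].
Definition faces : {set {set D}} := [set face_of d | d : D].
Definition is_vertex (v : {set D}) := v \in vertices.
Definition is_face (f : {set D}) := f \in faces.

(* deg v = #|v| (no loops);  |f| = #|f| = length of boundary walk *)
(* corners of v <-> darts d in v; the corner between d and sigma d lies on
   face_of (sigma d); hence F(v) = multiset {face_of d | d in v}. *)
Definition incident_face (v f : {set D}) : bool := [exists d in v, d \in f].

Definition curv (v : {set D}) : rat :=
  1 - (#|v|%:R / 2%:R) + \sum_(d in v) (#|face_of d|%:R)^-1.

Definition adjacent (v v' : {set D}) : bool := [exists d in v, alpha d \in v'].

Definition edge_on_face (v v' f : {set D}) : bool :=
  [exists d in v, (alpha d \in v') && ((d \in f) || (alpha d \in f))].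

Definition connected_map : Prop :=
  forall x y, connect (fun a b => (b == alpha a) || (b == sigma a)) x y.

Definition planar_map : Prop :=
  injective sigma /\ involutive alpha /\ (forall d, alpha d != d) /\
      connected_map /\
      (* no loops *) (forall d, ~~ fconnect sigma d (alpha d)) /\
      (* no multiple edges *)
      (forall d d', fconnect sigma d d' -> fconnect sigma (alpha d) (alpha d') -> d = d') /\
      (* Euler: V - E + F = 2, with E = #|D|/2 *)
      (#|vertices| + #|faces|).*2 = #|D| + 4.

Definition is_prism : Prop :=
  exists N, exists f1 f2 : {set D},
    [/\ 3 <= N /\ is_face f1 /\ is_face f2 /\ f1 != f2, #|f1| = N /\ #|f2| = N,
        #|vertices| = 2 * N /\ #|faces| = N + 2,
        (forall f, is_face f -> f != f1 -> f != f2 -> #|f| = 4) &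
        (forall v, is_vertex v -> #|v| = 3 /\ #|v :&: (f1 :|: f2)| = 1)].

Definition is_antiprism : Prop :=
  exists N, exists f1 f2 : {set D},
    [/\ 3 <= N /\ is_face f1 /\ is_face f2 /\ f1 != f2, #|f1| = N /\ #|f2| = N,
        #|vertices| = 2 * N /\ #|faces| = 2 * N + 2,
        (forall f, is_face f -> f != f1 -> f != f2 -> #|f| = 3) &
        (forall v, is_vertex v -> #|v| = 4 /\ #|v :&: (f1 :|: f2)| = 1)].

Definition planar_pcc : Prop :=
  [/\ planar_map,
      (forall v, is_vertex v -> (0 < curv v)%R /\ 3 <= #|v|),
      ~ is_prism & ~ is_antiprism].

End Maps.

(* Submission.v *)
Require Import Defs.
From HB Require Import structures.
From mathcomp Require Import all_boot all_order all_algebra.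
From mathcomp Require Import lra.
Set Implicit Arguments. Unset Strict Implicit. Unset Printing Implicit Defensive.
Import GRing.Theory Num.Theory.

Section Gen.
Variable T : finType.
Variable f : T -> T.
Hypothesis fI : injective f.

Lemma fcsym x y : fconnect f x y -> fconnect f y x.
Proof. by rewrite fconnect_sym. Qed.

Lemma fctrans x y z : fconnect f x y -> fconnect f y z -> fconnect f x z.
Proof. exact: connect_trans. Qed.

Lemma fstep x : fconnect f x (f x). Proof. exact: fconnect1. Qed.
Lemma fstepb x : fconnect f (f x) x. Proof. exact: fcsym (fstep x). Qed.

Lemma order_eq x y : fconnect f x y -> order f x = order f y.
Proof.
move=> xy; apply: eq_card => z; rewrite !inE /=.
apply/idP/idP => H; first exact: fctrans (fcsym xy) H.
exact: fctrans xy H.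
Qed.

Lemma iter_neq x k : 0 < k < order f x -> iter k f x != x.
Proof.
case/andP=> k0 kn.
have U := orbit_uniq f x.
have := nth_uniq x _ _ U; rewrite size_orbit => /(_ k 0 kn (order_gt0 _ _)).
rewrite /orbit !nth_traject // ?order_gt0 // => ->.
by rewrite -lt0n.
Qed.

End Gen.

Record LH (D : finType) (a s : D -> D) : Prop := {
  lh_sI : injective s;
  lh_aK : involutive a;
  lh_noloop : forall d, ~~ fconnect s d (a d);
  lh_nomulti : forall d d', fconnect s d d' -> fconnect s (a d) (a d') -> d = d';
  lh_deg3 : forall x, 3 <= order s x;
  lh_curvpos : forall x, (0 < curv a s (vertex_of s x))%R }.

Section Local.
Variables (D : finType) (a s : D -> D).
Hypothesis H : LH a s.
Let sI := lh_sI H.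
Let aK := lh_aK H.
Let noloop := lh_noloop H.
Let nomulti := lh_nomulti H.
Let deg3 := lh_deg3 H.
Let curvpos := lh_curvpos H.
Local Set Default Proof Using "H".

Local Notation p := (phi a s).

Lemma pI : injective p.
Proof. move=> x y; rewrite /phi => /sI /(can_inj aK); done. Qed.

Lemma s1 x : s x != x.
Proof. by have := @iter_neq _ s x 1; apply; rewrite /= (leq_trans _ (deg3 x)). Qed.
Lemma s2 x : s (s x) != x.
Proof. by have := @iter_neq _ s x 2; apply; rewrite /= (leq_trans _ (deg3 x)). Qed.

Lemma order_p_ge3 x : 3 <= order p x.
Proof.
case Ho: (order p x) => [|[|[|n]]] //.
- by have := order_gt0 p x; rewrite Ho.
- have := iter_order pI x; rewrite Ho /= /phi => Hx.
  by have := noloop x; rewrite -{1}Hx fstepb.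
- have := iter_order pI x; rewrite Ho /= => Hx.
  set z := p x in Hx.
  have H1 : fconnect s x (a z) by rewrite fconnect_sym // -Hx /phi fstep.
  have H2 : fconnect s (a x) (a (a z)) by rewrite aK /z /phi fstep.
  have E := nomulti H1 H2.
  by have := s1 x; rewrite {1}E -/(phi a s z) Hx eqxx.
Qed.

Definition g (y : D) : rat := ((order p y)%:R)^-1.

Lemma card_vertex x : #|vertex_of s x| = order s x.
Proof. by rewrite /vertex_of cardsE. Qed.
Lemma card_face x : #|face_of a s x| = order p x.
Proof. by rewrite /face_of cardsE. Qed.

Lemma curvE x : curv a s (vertex_of s x) =
  (1 - (order s x)%:R / 2%:R + \sum_(y <- orbit s x) g y)%R.
Proof.
rewrite /curv card_vertex; congr (_ + _)%R.
rewrite big_uniq ?orbit_uniq //; apply: eq_big => y.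
  by rewrite inE -fconnect_orbit.
by rewrite card_face.
Qed.

End Local.

Lemma inv_le (m n : nat) : (0 < m)%N -> (m <= n)%N -> (((n%:R)^-1 : rat) <= (m%:R)^-1)%R.
Proof.
move=> m0 mn; rewrite lef_pV2 ?posrE ?ltr0n ?ler_nat //.
exact: leq_trans mn.
Qed.

Section Num.
Variables (D : finType) (a s : D -> D).
Hypothesis H : LH a s.
Let sI := lh_sI H.
Let aK := lh_aK H.
Let noloop := lh_noloop H.
Let nomulti := lh_nomulti H.
Let deg3 := lh_deg3 H.
Let curvpos := lh_curvpos H.
Local Set Default Proof Using "H".

Local Notation p := (phi a s).
Local Notation g := (g a s).
Definition big (y : D) := 20 <= order p y.

Lemma g_le3 y : (g y <= 3%:R^-1)%R.
Proof. apply: inv_le => //; exact: order_p_ge3. Qed.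

Lemma g_le k y : (0 < k)%N -> (k <= order p y)%N -> (g y <= k%:R^-1)%R.
Proof. exact: inv_le. Qed.

Lemma g_ge0 y : (0 <= g y)%R.
Proof. by rewrite /g invr_ge0 ler0n. Qed.

Lemma sum_le q : (\sum_(y <- q) g y <= (size q)%:R / 3%:R)%R.
Proof.
elim: q => [|y q IH]; first by rewrite big_nil mul0r.
rewrite big_cons /= -add1n natrD mulrDl mul1r.
by apply: lerD => //; apply: g_le3.
Qed.

Lemma sum_le1 r x : x \in r ->
  (\sum_(y <- r) g y + 3%:R^-1 <= g x + (size r)%:R / 3%:R)%R.
Proof.
move=> xr; rewrite (perm_big _ (perm_to_rem xr)) big_cons /=.
have := sum_le (rem x r); rewrite size_rem // => Hq.
have Hs : (size r = (size r).-1.+1)%N by move: xr; case: (r).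
rewrite Hs; move: Hq; set m := (size r).-1 => Hq; rewrite -[(m.+1%:R)%R]natr1 /=; lra.
Qed.

Lemma sum_le2 r x y : uniq r -> x \in r -> y \in r -> x != y ->
  (\sum_(z <- r) g z + 2%:R/3%:R <= g x + g y + (size r)%:R / 3%:R)%R.
Proof.
move=> ur xr yr xy; rewrite (perm_big _ (perm_to_rem xr)) big_cons /=.
have yr' : y \in rem x r by rewrite (rem_filter _ ur) mem_filter /= eq_sym xy.
have := sum_le1 yr'; rewrite size_rem // => Hq.
have Hs : (size r = (size r).-1.+1)%N by move: xr; case: (r).
rewrite Hs; move: Hq; set m := (size r).-1 => Hq; rewrite -[(m.+1%:R)%R]natr1 /=; lra.
Qed.

Lemma big_unique x y : big x -> big y -> fconnect s x y -> x = y.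
Proof.
move=> bx by_ xy; apply/eqP/negPn/negP => nxy.
have := curvpos x; rewrite (curvE H).
have := sum_le2 (orbit_uniq s x) (in_orbit s x) _ nxy; rewrite -fconnect_orbit => /(_ xy).
have := g_le (y:=x) (isT : (0 < 20)%N) bx.
have := g_le (y:=y) (isT : (0 < 20)%N) by_.
have := deg3 x; rewrite -(ler_nat rat) size_orbit.
move: ((order s x)%:R)%R => n; lra.
Qed.

Lemma big_deg x : big x -> order s x <= 4.
Proof.
move=> bx; rewrite leqNgt; apply/negP => H5.
have := curvpos x; rewrite (curvE H).
have := sum_le1 (in_orbit s x).
have := g_le (y:=x) (isT : (0 < 20)%N) bx.
have H5' : (5 <= order s x)%N := H5.
move: H5'; rewrite -(ler_nat rat) size_orbit.
move: ((order s x)%:R)%R => n; lra.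
Qed.

Lemma orbit3 b : order s b = 3 -> orbit s b = [:: b; s b; s (s b)].
Proof. by rewrite /orbit => ->. Qed.
Lemma orbit4 b : order s b = 4 -> orbit s b = [:: b; s b; s (s b); s (s (s b))].
Proof. by rewrite /orbit => ->. Qed.

Lemma C3 b : big b -> order s b = 3 -> 4 <= order p (s b) -> 4 <= order p (s (s b)) ->
  order p (s b) = 4 /\ order p (s (s b)) = 4.
Proof.
move=> bb H3 h1 h2.
have := curvpos b; rewrite (curvE H) orbit3 // !big_cons big_nil H3 => Hc.
have := g_le (y:=b) (isT : (0 < 20)%N) bb => Hb.
have key : forall A B : rat, (g (s b) <= A)%R -> (g (s (s b)) <= B)%R ->
   (A + B <= 2^-1 - 20^-1)%R -> False.
  by move=> A B hA hB hAB; move: Hc Hb hA hB hAB; lra.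
have k1 : ~~ (4 < order p (s b)).
  apply/negP => h; apply: (key (5^-1)%R (4^-1)%R); first exact: g_le h.
    exact: g_le h2.
  lra.
have k2 : ~~ (4 < order p (s (s b))).
  apply/negP => h; apply: (key (4^-1)%R (5^-1)%R); first exact: g_le h1.
    exact: g_le h.
  lra.
by split; apply/eqP; rewrite eqn_leq leqNgt ?k1 ?k2.
Qed.

Lemma C4 b : big b -> order s b = 4 ->
  [/\ order p (s b) = 3, order p (s (s b)) = 3 & order p (s (s (s b))) = 3].
Proof.
move=> bb H4.
have := curvpos b; rewrite (curvE H) orbit4 // !big_cons big_nil H4 => Hc.
have := g_le (y:=b) (isT : (0 < 20)%N) bb => Hb.
have h1 := order_p_ge3 H (s b).
have h2 := order_p_ge3 H (s (s b)).
have h3 := order_p_ge3 H (s (s (s b))).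
have key : forall A B C : rat, (g (s b) <= A)%R -> (g (s (s b)) <= B)%R ->
   (g (s (s (s b))) <= C)%R -> (A + B + C <= 1 - 20^-1)%R -> False.
  by move=> A B C hA hB hC hABC; move: Hc Hb hA hB hC hABC; lra.
have k1 : ~~ (3 < order p (s b)).
  apply/negP => h; apply: (key (4^-1)%R (3^-1)%R (3^-1)%R); first exact: g_le h.
  - exact: g_le h2.
  - exact: g_le h3.
  lra.
have k2 : ~~ (3 < order p (s (s b))).
  apply/negP => h; apply: (key (3^-1)%R (4^-1)%R (3^-1)%R); first exact: g_le h1.
  - exact: g_le h.
  - exact: g_le h3.
  lra.
have k3 : ~~ (3 < order p (s (s (s b)))).
  apply/negP => h; apply: (key (3^-1)%R (3^-1)%R (4^-1)%R); first exact: g_le h1.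
  - exact: g_le h2.
  - exact: g_le h.
  lra.
by split; apply/eqP; rewrite eqn_leq leqNgt ?k1 ?k2 ?k3.
Qed.

End Num.

Section Geo.
Variables (D : finType) (a s : D -> D).
Hypothesis H : LH a s.
Let sI := lh_sI H.
Let aK := lh_aK H.
Let noloop := lh_noloop H.
Let nomulti := lh_nomulti H.
Let deg3 := lh_deg3 H.
Let curvpos := lh_curvpos H.
Local Set Default Proof Using "H".

Local Notation p := (phi a s).
Local Notation big := (big a s).
Let pI := pI H.
Let bigU := big_unique H.
Let s1 := s1 H.
Let s2 := s2 H.

Definition hasbig y := exists z, fconnect s y z /\ big z.
Definition bad d := [/\ hasbig d, hasbig (a d), ~~ big d && ~~ big (s d) & ~~ big (a d) && ~~ big (s (a d))].

Lemma bad_sym d : bad d -> bad (a d).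
Proof. by case=> *; split; rewrite ?aK. Qed.

Lemma big_conn x y : fconnect p x y -> big x = big y.
Proof. by move=> xy; rewrite /big (order_eq pI xy). Qed.

Lemma big_p x : big (p x) = big x.
Proof. by rewrite (big_conn (fstep p x)). Qed.

Lemma ord3 b : order s b = 3 -> s (s (s b)) = b.
Proof. by move=> Ho; have := iter_order sI b; rewrite Ho. Qed.
Lemma ord4 b : order s b = 4 -> s (s (s (s b))) = b.
Proof. by move=> Ho; have := iter_order sI b; rewrite Ho. Qed.
Lemma s3 b : order s b = 4 -> s (s (s b)) != b.
Proof. by move=> Ho; have := @iter_neq _ s b 3; apply; rewrite Ho. Qed.

Lemma vert3 b y : order s b = 3 -> fconnect s b y -> [\/ y = b, y = s b | y = s (s b)].
Proof.
move=> Ho; rewrite fconnect_orbit (orbit3 H) // !inE.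
by case/or3P => /eqP ->; [apply: Or31 | apply: Or32 | apply: Or33].
Qed.
Lemma vert4 b y : order s b = 4 -> fconnect s b y ->
  [\/ y = b, y = s b, y = s (s b) | y = s (s (s b))].
Proof.
move=> Ho; rewrite fconnect_orbit (orbit4 H) // !inE.
by case/or4P => /eqP ->; [apply: Or41 | apply: Or42 | apply: Or43 | apply: Or44].
Qed.

Lemma deg34 b : big b -> order s b = 3 \/ order s b = 4.
Proof.
move=> bb; have := big_deg H bb; have := deg3 b.
by case: (order s b) => [|[|[|[|[|]]]]] //; auto.
Qed.

Lemma sconn k x : fconnect s x (iter k s x).
Proof. exact: fconnect_iter. Qed.

Lemma nbig_s x b : big b -> fconnect s b x -> x != b -> ~~ big x.
Proof.
move=> bb bx xb; apply/negP => bx'; move/eqP: xb; apply.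
by apply: bigU bx' bb _; rewrite fconnect_sym.
Qed.

Lemma pos3 b d : big b -> order s b = 3 -> fconnect s b d -> ~~ big d -> ~~ big (s d) -> d = s b.
Proof.
move=> bb Ho bd nd nsd; case/(vert3 Ho): bd => E; subst d => //.
- by rewrite bb in nd.
- by rewrite ord3 // bb in nsd.
Qed.

Lemma pos4 b d : big b -> order s b = 4 -> fconnect s b d -> ~~ big d -> ~~ big (s d) ->
  d = s b \/ d = s (s b).
Proof.
move=> bb Ho bd nd nsd; case/(vert4 Ho): bd => E; subst d; auto.
- by rewrite bb in nd.
- by rewrite ord4 // bb in nsd.
Qed.

Lemma lemT b d b' : big b -> d = s b -> order p d = 3 -> big b' -> s (s (a d)) = b' -> False.
Proof.
move=> bb db o3 bb' E'.
have p3 : p (p (p d)) = d by have := iter_order pI d; rewrite o3.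
have pab : p (a b) = d by rewrite /phi aK db.
have E : p (p d) = a b by apply: pI; rewrite p3 pab.
set y1 := a (s (a d)).
have sy1 : s y1 = a b by rewrite -E.
have bpb : big (p b) by rewrite big_p.
have by1 : big y1.
  by rewrite -big_p /phi /y1 aK E'.
have := bigU by1 bpb; rewrite /phi -sy1 => /(_ (sconn 2 y1)) /esym /eqP.
by rewrite (negbTE (s2 y1)).
Qed.

End Geo.

Section Class.
Variables (D : finType) (a s : D -> D).
Hypothesis H : LH a s.
Let sI := lh_sI H.
Let aK := lh_aK H.
Let deg3 := lh_deg3 H.
Local Set Default Proof Using "H".
Local Notation p := (phi a s).
Local Notation big := (big a s).
Local Notation bad := (bad a s).
Let pI := pI H.
Let bigU := big_unique H.
Let s1 := s1 H.
Let s2 := s2 H.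
Let ord3 := ord3 H.
Let ord4 := ord4 H.

Lemma p_as d : p (a d) = s d.
Proof. by rewrite /phi aK. Qed.

Lemma ord_pa d : order p (a d) = order p (s d).
Proof. by rewrite -p_as (order_eq pI (fstep p _)). Qed.

Lemma ord_p d : order p (p d) = order p d.
Proof. by rewrite -(order_eq pI (fstep p d)). Qed.

Lemma classify d b b' : bad d -> big b -> fconnect s b d -> big b' -> fconnect s b' (a d) ->
  (order s b = 3 /\ order s b' = 3 /\ d = s b /\ a d = s b' /\ order p d = 4 /\ order p (a d) = 4)
  \/ (order s b = 4 /\ order s b' = 4 /\ ((d = s b /\ a d = s b') \/ (d = s (s b) /\ a d = s (s b')))).
Proof.
case=> _ _ /andP[nd nsd] /andP[nad nsad] bb bd bb' bd'.
have T1 : forall d, d = s b -> order p d = 3 -> s (s (a d)) = b' -> False.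
  by move=> x E o; apply: (lemT H bb E o bb').
have T2 : forall d, d = s b' -> order p d = 3 -> s (s (a d)) = b -> False.
  by move=> x E o; apply: (lemT H bb' E o bb).
case: (deg34 H bb) => Hb; case: (deg34 H bb') => Hb'.
- have E := pos3 H bb Hb bd nd nsd.
  have E' := pos3 H bb' Hb' bd' nad nsad.
  have o1 : 3 < order p d.
    rewrite ltn_neqAle order_p_ge3 // andbT eq_sym; apply/eqP => o3.
    by apply: (T1 d E o3); rewrite E' ord3.
  have o2 : 3 < order p (a d).
    rewrite ltn_neqAle order_p_ge3 // andbT eq_sym; apply/eqP => o3.
    by apply: (T2 (a d) E' o3); rewrite aK E ord3.
  have h1 : 3 < order p (s b) by rewrite -E.
  have h2 : 3 < order p (s (s b)) by rewrite -E -ord_pa.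
  have [c1 c2] := C3 H bb Hb h1 h2.
  left; do 4 (split => //); split; first by rewrite E.
  by rewrite ord_pa E.
- exfalso.
  have E := pos3 H bb Hb bd nd nsd.
  have [c1 c2 c3] := C4 H bb' Hb'.
  case: (pos4 H bb' Hb' bd' nad nsad) => E'.
  + by apply: (T2 (a d) E'); [rewrite E' | rewrite aK E ord3].
  + have Epd : p d = s (s (s b')) by rewrite /phi E'.
    by apply: (T1 d E); [rewrite -ord_p Epd | rewrite E' ord4].
- exfalso.
  have E' := pos3 H bb' Hb' bd' nad nsad.
  have [c1 c2 c3] := C4 H bb Hb.
  case: (pos4 H bb Hb bd nd nsd) => E.
  + by apply: (T1 d E); [rewrite E | rewrite E' ord3].
  + by apply: (T2 (a d) E'); [rewrite ord_pa E | rewrite aK E ord4].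
- have [c1 c2 c3] := C4 H bb Hb.
  have [e1 e2 e3] := C4 H bb' Hb'.
  case: (pos4 H bb Hb bd nd nsd) => E; case: (pos4 H bb' Hb' bd' nad nsad) => E'.
  + by right; do 2 (split => //); left.
  + by exfalso; apply: (T1 d E); [rewrite E | rewrite E' ord4].
  + by exfalso; apply: (T2 (a d) E'); [rewrite E' | rewrite aK E ord4].
  + by right; do 2 (split => //); right.
Qed.
End Class.

Section Fwd.
Variables (D : finType) (a s : D -> D).
Hypothesis H : LH a s.
Let sI := lh_sI H.
Let aK := lh_aK H.
Let deg3 := lh_deg3 H.
Local Set Default Proof Using "H".
Local Notation p := (phi a s).
Local Notation big := (big a s).
Local Notation bad := (bad a s).
Local Notation hasbig := (hasbig a s).
Let pI := pI H.
Let bigU := big_unique H.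
Let s1 := s1 H.
Let s2 := s2 H.
Let ord3 := ord3 H.
Let ord4 := ord4 H.
Let p_as := p_as H.
Let ord_p := ord_p H.
Let ord_pa := ord_pa H.
Let nbig_s := nbig_s H.
Let big_p := big_p H.

Definition Pt k b := [/\ big b, order s b = k & bad (s b)].
Definition gm b := finv s (a (s b)).

Lemma face_eq x y : fconnect p x y -> face_of a s x = face_of a s y.
Proof.
move=> xy; apply/setP => z; rewrite !inE; apply/idP/idP => h.
  exact: fctrans (fcsym pI xy) h.
exact: fctrans xy h.
Qed.

Lemma hb x y : fconnect s x y -> big y -> hasbig x.
Proof. by move=> xy by_; exists y. Qed.

Lemma gmE z : gm z = finv s (a (s z)). Proof. by []. Qed.

Lemma Pg k b : Pt k b -> Pt k (gm b) /\ a (s b) = s (gm b).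
Proof.
case=> bb ok bd; have bd0 := bd; case: bd0 => _ [z [zc bz]] _ _.
case: (classify H bd bb (fstep s b) bz (fcsym sI zc)).
- case=> o3 [o3' [_ [E _]]].
  have gz : gm b = z by rewrite /gm E finv_f.
  rewrite gz; split => //; split => //; first by rewrite o3' -ok o3.
  by rewrite -E; apply: bad_sym.
- case=> o4 [o4' [[_ E]|[E _]]].
  + have gz : gm b = z by rewrite /gm E finv_f.
    rewrite gz; split => //; split => //; first by rewrite o4' -ok o4.
    by rewrite -E; apply: bad_sym.
  + by have := s1 b; rewrite -(sI E) eqxx.
Qed.

Lemma fwd3 b : Pt 3 b -> Pt 3 (p b) /\ face_of a s (gm (p b)) = face_of a s (gm b).
Proof.
move=> Pb; have [Pb' Ed] := Pg Pb.
case: Pb => bb ob bd; case: Pb' => bb' ob' bd'.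
set d := s b in bd Ed; set b' := gm b in Ed bb' ob' bd' *.
have od : order p d = 4.
  case: (classify H bd bb (fstep s b) bb' _); first by rewrite Ed; apply: fstep.
    by case=> _ [_ [_ [_ []]]].
  by case; rewrite ob.
have p4 : p (p (p (p d))) = d by have := iter_order pI d; rewrite od.
have pab : p (a b) = d by rewrite p_as.
have E3 : p (p (p d)) = a b by apply: pI; rewrite p4 pab.
set c' := a (p (p d)).
have sc : s c' = a b by rewrite -E3.
set w0 := a (s (s b')).
have pw0 : p w0 = b' by rewrite /phi /w0 aK ord3.
have bw0 : big w0 by rewrite -big_p pw0.
have ac : a c' = s w0 by rewrite /c' aK /w0 {1}/phi /phi Ed.
have bpb : big (p b) by rewrite big_p.
have ssc : s (s c') = p b by rewrite sc.
have cpb : fconnect s (p b) c' by rewrite fconnect_sym // -ssc (fconnect_iter s 2 _).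
have bc : bad c'.
  split.
  - by apply: hb bpb; rewrite -ssc; exact: (fconnect_iter s 2 _).
  - by apply: hb bw0; rewrite ac; apply: fstepb.
  - rewrite (nbig_s bpb cpb) ?(nbig_s bpb) //.
    + by apply: fctrans cpb (fstep s _).
    + by rewrite -ssc eq_sym s1.
    + by rewrite -ssc eq_sym s2.
  - rewrite ac (nbig_s bw0 (fstep s _)) ?s1 // (nbig_s bw0) ?s2 //.
    exact: (fconnect_iter s 2 _).
case: (classify H bc bpb cpb bw0 _); first by rewrite ac; apply: fstep.
- case=> o3 [_ [Ec [_ _]]].
  split; first by split => //; rewrite -Ec.
  rewrite /gm -Ec ac finv_f // -pw0; apply: face_eq; exact: fstep.
- case=> o4 _; exfalso.
  have [_ _ c3] := C4 H bpb o4.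
  have Eab : s (s (s (p b))) = a b.
    by apply: sI; rewrite ord4 //.
  have : order p (a b) = 4 by rewrite -ord_p pab.
  by rewrite -Eab c3.
Qed.

Let s3 := s3 H.

Lemma fwd4 b : Pt 4 b -> Pt 4 (p b) /\ face_of a s (gm (p b)) = face_of a s (gm b).
Proof.
move=> Pb; have [Pb' Ed] := Pg Pb.
case: Pb => bb ob bd; case: Pb' => bb' ob' bd'.
set d := s b in bd Ed; set b' := gm b in Ed bb' ob' bd' *.
have [c1 c2 c3] := C4 H bb ob.
have [e1 e2 e3] := C4 H bb' ob'.
have p3 : p (p (p d)) = d by have := iter_order pI d; rewrite c1.
have pab : p (a b) = d by rewrite p_as.
have E2 : p (p d) = a b by apply: pI; rewrite p3 pab.
have pd : p d = s (s b') by rewrite /phi Ed.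
set c' := a (s (s b')).
have sc : s c' = a b by rewrite -E2 pd.
have ssc : s (s c') = p b by rewrite sc.
have bpb : big (p b) by rewrite big_p.
have cpb : fconnect s (p b) c' by rewrite fconnect_sym // -ssc; exact: (fconnect_iter s 2 _).
have ac : a c' = s (s b') by rewrite /c' aK.
have bc : bad c'.
  split.
  - by apply: hb bpb; rewrite -ssc; exact: (fconnect_iter s 2 _).
  - by apply: hb bb'; rewrite ac fconnect_sym //; exact: (fconnect_iter s 2 _).
  - rewrite (nbig_s bpb cpb) ?(nbig_s bpb) //.
    + by apply: fctrans cpb (fstep s _).
    + by rewrite -ssc eq_sym s1.
    + by rewrite -ssc eq_sym s2.
  - rewrite ac (nbig_s bb' (fconnect_iter s 2 _)) ?s2 // (nbig_s bb' (fconnect_iter s 3 _)) //.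
    exact: s3.
case: (classify H bc bpb cpb bb' _); first by rewrite ac; exact: (fconnect_iter s 2 _).
  by case=> _ [o3 _]; move: ob'; rewrite o3.
case=> o4 _.
have [f1 f2 f3] := C4 H bpb o4.
set x := s (p b).
have sx : s x = c'.
  apply: sI; apply: sI; rewrite ssc /x; exact: ord4.
have oax : order p (a x) = 3 by rewrite ord_pa; exact: f2.
have pax : p (a x) = c' by rewrite p_as.
have p3x : p (p (p (a x))) = a x by have := iter_order pI (a x); rewrite oax.
set w1 := a (s (s (s b'))).
have axw : a x = s w1 by rewrite -p3x pax {2}/phi ac.
have pw1 : p w1 = b' by rewrite /phi /w1 aK ord4.
have bw1 : big w1 by rewrite -big_p pw1.
have bx : bad x.
  split.
  - by apply: hb bpb; exact: fstepb.
  - by apply: hb bw1; rewrite axw; exact: fstepb.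
  - rewrite (nbig_s bpb (fstep s _)) ?s1 // (nbig_s bpb (fconnect_iter s 2 _)) ?s2 //.
  - rewrite axw (nbig_s bw1 (fstep s _)) ?s1 // (nbig_s bw1 (fconnect_iter s 2 _)) ?s2 //.
split; first by split.
rewrite /gm -/x axw finv_f // -pw1; apply: face_eq; exact: fstep.
Qed.

End Fwd.

Lemma conn_all (D : finType) (a s : D -> D) (P : D -> Prop) x0 :
  connected_map a s -> (forall x, P x -> P (a x)) -> (forall x, P x -> P (s x)) ->
  P x0 -> forall y, P y.
Proof.
move=> C Ha Hs Px y; have /connectP [q pq ->] := C x0 y.
elim: q x0 Px pq => [|z q IH] x Px //= /andP[/orP[/eqP->|/eqP->] pq]; apply: IH pq; auto.
Qed.

Section Clos.
Variables (D : finType) (a s : D -> D).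
Hypothesis H : LH a s.
Let sI := lh_sI H.
Let aK := lh_aK H.
Let deg3 := lh_deg3 H.
Local Notation p := (phi a s).
Local Notation big := (big a s).
Local Notation bad := (bad a s).
Local Notation Pt := (Pt a s).
Local Notation gm := (gm a s).
Let pI := pI H.
Let bigU := big_unique H.
Let s1 := s1 H.
Let s2 := s2 H.
Let ord3 := ord3 H.
Let ord4 := ord4 H.
Let p_as := p_as H.
Let ord_p := ord_p H.
Let ord_pa := ord_pa H.
Let nbig_s := nbig_s H.
Let big_p := big_p H.

Variable k : nat.
Hypothesis k34 : k = 3 \/ k = 4.

Lemma fwd b : Pt k b -> Pt k (p b) /\ face_of a s (gm (p b)) = face_of a s (gm b).
Proof. by case: k34 => ->; [apply: fwd3 | apply: fwd4]. Qed.

Lemma fwd_iter b y : Pt k b -> fconnect p b y -> Pt k y /\ face_of a s (gm y) = face_of a s (gm b).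
Proof.
move=> Pb /iter_findex <-; elim: (findex p b y) => [|n [Pn En]] //=.
by have [P1 E1] := fwd Pn; rewrite E1.
Qed.

Variable Q : {set D} -> Prop.
Hypothesis HQ : forall b, Pt k b -> Q (face_of a s b) -> Q (face_of a s (gm b)).

Definition SQ x := exists b, [/\ fconnect s x b, Pt k b & Q (face_of a s b)].

Lemma SQ_s x : SQ x -> SQ (s x).
Proof. case=> b [xb Pb Qb]; exists b; split => //; exact: fctrans (fstepb sI x) xb. Qed.


Lemma SQ_face x b y : Pt k b -> Q (face_of a s b) -> fconnect p b y -> fconnect s x y -> SQ x.
Proof.
move=> Pb Qb by_ xy; exists y; split => //; first by case: (fwd_iter Pb by_).
by rewrite -(face_eq H by_).
Qed.

Lemma SQ_a x : SQ x -> SQ (a x).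
Proof.
case=> b [xb Pb Qb].
have Pb0 := Pb; case: Pb0 => bb ob bd.
have [Pg' Eg] := Pg H Pb.
have bx : fconnect s b x by rewrite fconnect_sym.
have caseb : SQ (a b).
  by apply: (SQ_face Pb Qb (fstep p b)); exact: fstep.
have casesb : SQ (a (s b)).
  by exists (gm b); split => //; [rewrite Eg; exact: fstepb | exact: HQ].
have caseinv : forall z, s z = b -> SQ (a z).
  move=> z sz; apply: (SQ_face Pb Qb (y := a z)) => //.
  by rewrite fconnect_sym //= -sz -p_as; exact: fstep.
case: k34 => ek; rewrite ek in ob.
- by case/(vert3 H ob): bx => ->; [ | | apply: caseinv; rewrite ord3].
- case/(vert4 H ob): bx => ->; [by [] | by [] | | by apply: caseinv; rewrite ord4].
  (* x = s (s b) *)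
  have [_ ob' _] := Pg'. rewrite ek in ob'.
  have bb' : big (gm b) by case: Pg'.
  have [e1 _ _] := C4 H bb' ob'.
  have oad : order p (a (s b)) = 3 by rewrite Eg.
  have p3 : p (p (p (a (s b)))) = a (s b) by have := iter_order pI (a (s b)); rewrite oad.
  have pab' : p (a (gm b)) = a (s b) by rewrite p_as Eg.
  have E2 : p (p (a (s b))) = a (gm b) by apply: pI; rewrite p3 pab'.
  have E3 : s (a (s (s b))) = a (gm b) by rewrite -E2 p_as.
  have [Pg'' _] := fwd Pg'.
  exists (p (gm b)); split => //.
  - apply: fctrans (fstep s _) _; rewrite E3; exact: fstep.
  - by rewrite -(face_eq H (fstep p _)); apply: HQ.
Qed.

End Clos.

Lemma orbits_card (D : finType) (f : D -> D) (Q : pred {set D}) : injective f ->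
  (#|[set O in [set [set y | fconnect f x y] | x : D] | Q O]|%:R : rat) =
  (\sum_(x | Q [set y | fconnect f x y]) ((order f x)%:R)^-1)%R.
Proof.
move=> fI; set orb := fun x => [set y | fconnect f x y].
rewrite (partition_big orb (fun O => O \in [set O in [set orb x | x : D] | Q O])) /=; last first.
  by move=> x Qx; rewrite inE Qx andbT; apply: imset_f.
rewrite -sum1_card natr_sum; apply: eq_bigr => O; rewrite inE => /andP[/imsetP[y _ ->] Qy].
have E : forall x, (orb x == orb y) = fconnect f y x.
  move=> x; apply/eqP/idP => [/setP/(_ x)|yx]; first by rewrite /orb !inE connect0 => <-.
  apply/setP => z; rewrite !inE; apply/idP/idP => h.
    exact: fctrans yx h.
  exact: fctrans (fcsym fI yx) h.
rewrite (eq_bigl (fun x => x \in orb y)); last first.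
  move=> x /=; rewrite E inE; case yx: (fconnect f y x) => //; last by rewrite andbF.
  rewrite andbT; have /eqP Exy : orb x == orb y by rewrite E.
  by rewrite -[X in Q X]/(orb x) Exy.
rewrite (eq_bigr (fun _ => ((#|orb y|)%:R)^-1)%R); last first.
  move=> x; rewrite inE => yx; congr (_^-1)%R; congr (_%:R)%R.
  by rewrite -(order_eq fI yx) /orb cardsE.
rewrite sumr_const; set n := #|orb y|; rewrite -(mulr_natr (n%:R^-1)%R n) mulVf // pnatr_eq0 -lt0n.
by apply/card_gt0P; exists y; rewrite inE connect0.
Qed.

Section Glob.
Variables (D : finType) (a s : D -> D).
Hypothesis H : LH a s.
Hypothesis Hc : connected_map a s.
Let sI := lh_sI H.
Let aK := lh_aK H.
Let deg3 := lh_deg3 H.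
Local Notation p := (phi a s).
Local Notation big := (big a s).
Local Notation bad := (bad a s).
Local Notation Pt := (Pt a s).
Local Notation gm := (gm a s).
Let pI := pI H.
Let bigU := big_unique H.
Let s1 := s1 H.
Let s2 := s2 H.
Let ord3 := ord3 H.
Let ord4 := ord4 H.
Let p_as := p_as H.
Let ord_p := ord_p H.
Let ord_pa := ord_pa H.
Let nbig_s := nbig_s H.
Let big_p := big_p H.

Lemma bad_Pt d : bad d -> exists k b, (k = 3 \/ k = 4) /\ Pt k b.
Proof.
move=> bd; have bd0 := bd; case: bd0 => [[b [db bb]] [b' [db' bb']] _ _].
have bdb : fconnect s b d by rewrite fconnect_sym.
have bdb' : fconnect s b' (a d) by rewrite fconnect_sym.
case: (classify H bd bb bdb bb' bdb').
  case=> o3 [_ [E _]]; exists 3, b; split; [by left | split => //; by rewrite -E].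
case=> o4 [o4' [[E _]|[E E']]]; exists 4, b; (split; [by right | split => //]).
  by rewrite -E.
(* d = s (s b) *)
have [_ c2 _] := C4 H bb o4.
have p3 : p (p (p d)) = d by have := iter_order pI d; rewrite E c2.
set w := a (s (s (s b'))).
have pw : p w = b' by rewrite /phi /w aK ord4.
have bw : big w by rewrite -big_p pw.
have pd : p d = s (s (s b')) by rewrite /phi E'.
have ppd : p (p d) = s w by rewrite pd.
have asw : a (s w) = s b.
  by apply: sI; rewrite -[s (a _)]/(p _) -ppd p3 E.
split.
- by exists b; split => //; exact: fstepb.
- by exists w; rewrite -asw aK; split => //; exact: fstepb.
- rewrite (nbig_s bb (fstep s _)) ?s1 // (nbig_s bb (fconnect_iter s 2 _)) ?s2 //.
- rewrite -asw aK (nbig_s bw (fstep s _)) ?s1 // (nbig_s bw (fconnect_iter s 2 _)) ?s2 //.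
Qed.

Variable k : nat.
Hypothesis k34 : k = 3 \/ k = 4.
Variable b0 : D.
Hypothesis Pb0 : Pt k b0.

Lemma allT x : exists b, fconnect s x b /\ Pt k b.
Proof.
have : SQ a s k (fun _ => True) x.
  apply: (conn_all (x0 := b0) Hc).
  - by move=> y; apply: SQ_a.
  - by move=> y; apply: SQ_s.
  - by exists b0; split => //; exact: connect0.
by case=> b [xb Pb _]; exists b.
Qed.

Lemma ordk x : order s x = k.
Proof. by have [b [xb [_ <- _]]] := allT x; exact: (order_eq sI xb). Qed.

Lemma big_Pt x : big x -> Pt k x.
Proof.
move=> bx; have [b [xb Pb]] := allT x.
by have [bb _ _] := Pb; rewrite (bigU bx bb xb).
Qed.

Definition kk := if k == 3 then 4 else 3.

Lemma nonbig_face y : ~~ big y -> order p y = kk.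
Proof.
move=> ny; have [b [yb Pb]] := allT y.
have Pb0' := Pb; case: Pb0' => bb ob bd.
have [Pg' Eg] := Pg H Pb.
have bg : fconnect s b y by rewrite fconnect_sym.
case: k34 => ek; rewrite ek in ob; rewrite /kk ek /=.
- have [bb' _ _] := Pg'.
  have cl : order p (s b) = 4 /\ order p (a (s b)) = 4.
    case: (classify H bd bb (fstep s b) bb' _); first by rewrite Eg; exact: fstep.
      by case=> _ [_ [_ [_ []]]].
    by case; rewrite ob.
  case/(vert3 H ob): bg => E; subst y.
  + by rewrite bb in ny.
  + by case: cl.
  + by rewrite -ord_pa; case: cl.
- have [c1 c2 c3] := C4 H bb ob.
  case/(vert4 H ob): bg => E; subst y => //.
  by rewrite bb in ny.
Qed.

Lemma face_mem x O : is_face a s O -> x \in O -> face_of a s x = O.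
Proof.
case/imsetP => z _ -> xz; apply: face_eq => //.
by rewrite inE in xz; rewrite fconnect_sym.
Qed.

Lemma card_ge (f : D -> D) (Q : pred {set D}) : injective f ->
  (#|[set O in [set [set y | fconnect f x y] | x : D] | Q O]|%:R : rat) =
  (\sum_(x | Q [set y | fconnect f x y]) ((order f x)%:R)^-1)%R.
Proof. exact: orbits_card. Qed.

Lemma countV : (#|vertices s|%:R : rat) = (#|D|%:R / k%:R)%R.
Proof.
have := orbits_card (f:=s) predT sI.
have -> : [set O in [set [set y | fconnect s x y] | x : D] | predT O] = vertices s.
  by apply/setP => O; rewrite !inE andbT.
move=> ->; rewrite (eq_bigr (fun _ => (k%:R^-1)%R)); last by move=> x _; rewrite ordk.
rewrite sumr_const; set n := #|_|; have -> : n = #|D| by apply: eq_card.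
by rewrite -(mulr_natl (k%:R^-1)%R) mulrC.
Qed.

Definition bigset := [set x | big x].

Lemma countVB : #|vertices s| = #|bigset|.
Proof.
have -> : vertices s = [set vertex_of s x | x in bigset].
  apply/setP => O; apply/imsetP/imsetP => [[y _ ->]|[y _ ->]]; last by exists y.
  have [b [yb [bb _ _]]] := allT y.
  exists b; first by rewrite inE.
  apply/setP => z; rewrite !inE; apply/idP/idP => h.
    exact: fctrans (fcsym sI yb) h.
  exact: fctrans yb h.
rewrite card_in_imset // => x y; rewrite !inE => bx by_ E.
apply: bigU bx by_ _.
have : y \in vertex_of s y by rewrite inE connect0.
by rewrite -E inE.
Qed.

Definition bigfaces := [set O in faces a s | 20 <= #|O|].

Lemma countF : (#|faces a s|%:R : rat) =
   (#|bigfaces|%:R + (#|D| - #|bigset|)%:R / kk%:R)%R.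
Proof.
have := orbits_card (f:=p) predT pI.
have -> : [set O in [set [set y | fconnect p x y] | x : D] | predT O] = faces a s.
  by apply/setP => O; rewrite !inE andbT.
move=> ->; rewrite (bigID big) /=.
have hB := orbits_card (f:=p) (fun O => 20 <= #|O|) pI.
rewrite (eq_bigl big) in hB; last by move=> x /=; rewrite cardsE.
rewrite /bigfaces hB; congr (_ + _)%R.
rewrite (eq_bigr (fun _ => (kk%:R^-1)%R)); last by move=> x nx; rewrite nonbig_face.
rewrite sumr_const -(mulr_natl (kk%:R^-1)%R); congr (_ * _)%R; congr (_%:R)%R.
rewrite -(cardsC bigset) addKn; apply: eq_card => x; by rewrite !inE.
Qed.

Hypothesis Eu : (#|vertices s| + #|faces a s|).*2 = #|D| + 4.

Lemma B2 : #|bigfaces| = 2.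
Proof.
have eV := countV; have eF := countF; have eVB := countVB.
have eE : ((#|vertices s|%:R + #|faces a s|%:R) * 2%:R = #|D|%:R + 4%:R :> rat)%R.
  by rewrite -natrD -natrM muln2 Eu natrD.
rewrite natrB ?max_card // in eF.
rewrite eVB in eV eE.
apply/eqP; rewrite -(eqr_nat rat); apply/eqP.
move: eV eF eE; rewrite /kk.
move: (#|bigset|%:R)%R (#|faces a s|%:R)%R (#|D|%:R)%R (#|bigfaces|%:R)%R => V F N B.
by case: k34 => -> /=; lra.
Qed.

Lemma big_face x : big x -> face_of a s x \in bigfaces.
Proof. by move=> bx; rewrite inE (card_face H); apply/andP; split => //; apply/imset_f. Qed.

Lemma bigfaces_mem O : O \in bigfaces -> exists z, big z /\ O = face_of a s z.
Proof.
rewrite inE => /andP[/imsetP[z _ ->] hz]; exists z; split => //.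
by rewrite /Submission.big -(card_face H).
Qed.

Lemma in_face x : x \in face_of a s x.
Proof. by rewrite inE connect0. Qed.

Lemma face_diff x : big x -> face_of a s (gm x) != face_of a s x.
Proof.
move=> bx; apply/negP => /eqP E0.
set f0 := face_of a s x in E0.
have Px := big_Pt bx.
have HQ : forall b, Pt k b -> (fun O => O = f0) (face_of a s b) ->
    (fun O => O = f0) (face_of a s (gm b)).
  move=> b Pb /= Eb.
  have xb : fconnect p x b by have := in_face b; rewrite Eb inE.
  by have [_ ->] := fwd_iter H k34 Px xb.
have allS : forall y, SQ a s k (fun O => O = f0) y.
  apply: (conn_all (x0 := x) Hc).
  - by move=> y; apply: SQ_a.
  - by move=> y; apply: SQ_s.
  - by exists x; split => //; exact: connect0.
have /cards2P [O1 [O2 [O12 EB]]] : #|bigfaces| == 2 by rewrite B2.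
have [O [OB Of]] : exists O, O \in bigfaces /\ O != f0.
  case: (eqVneq O1 f0) => h.
    by exists O2; rewrite EB !inE eqxx orbT -h eq_sym.
  by exists O1; rewrite EB !inE eqxx.
have [z [bz Oz]] := bigfaces_mem OB.
have [b [zb Pb /= fb]] := allS z.
have [bb _ _] := Pb.
move: Of; rewrite Oz (bigU bz bb zb) fb eqxx //.
Qed.

Lemma gm_inj : injective gm.
Proof. by move=> x y /(finv_inj sI) /(inv_inj aK) /sI. Qed.

Lemma mapto O O' : bigfaces = [set O; O'] -> O != O' -> forall x, x \in O -> gm x \in O'.
Proof.
move=> EB OO' x xO.
have OB : O \in bigfaces by rewrite EB !inE eqxx.
have OF : is_face a s O by move: OB; rewrite inE => /andP[].
have fx := face_mem OF xO.
have bx : big x.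
  by move: OB; rewrite inE -fx (card_face H) => /andP[].
have [[bg _ _] _] := Pg H (big_Pt bx).
have := big_face bg; rewrite EB !inE => /orP[/eqP E|/eqP E].
  by move: (face_diff bx); rewrite E fx eqxx.
by rewrite -E in_face.
Qed.

Lemma card_le O O' : bigfaces = [set O; O'] -> O != O' -> #|O| <= #|O'|.
Proof.
move=> EB OO'; rewrite -(card_imset O gm_inj); apply: subset_leq_card.
by apply/subsetP => y /imsetP[x xO ->]; apply: (mapto EB OO').
Qed.

Lemma final : (k = 3 -> is_prism a s) /\ (k = 4 -> is_antiprism a s).
Proof.
have /cards2P [O1 [O2 [O12 EB]]] : #|bigfaces| == 2 by rewrite B2.
have EB' : bigfaces = [set O2; O1] by rewrite EB setUC.
have eN : #|O2| = #|O1|.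
  by apply/eqP; rewrite eqn_leq (card_le EB) // (card_le EB') // eq_sym.
have O1B : O1 \in bigfaces by rewrite EB !inE eqxx.
have O2B : O2 \in bigfaces by rewrite EB !inE eqxx orbT.
have [F1 c1] : is_face a s O1 /\ 20 <= #|O1| by move: O1B; rewrite inE => /andP.
have [F2 c2] : is_face a s O2 /\ 20 <= #|O2| by move: O2B; rewrite inE => /andP.
have Ebig : bigset = O1 :|: O2.
  apply/setP => x; rewrite !inE; apply/idP/idP => [bx|].
    have := big_face bx; rewrite EB !inE => /orP[/eqP E|/eqP E]; rewrite -E in_face ?orbT //.
  case/orP => xO.
    by have fx := face_mem F1 xO; rewrite /Submission.big -(card_face H) fx.
  by have fx := face_mem F2 xO; rewrite /Submission.big -(card_face H) fx.
have disj : O1 :&: O2 = set0.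
  apply/setP => x; rewrite !inE; apply/andP => [[x1 x2]].
  have E1 := face_mem F1 x1; have E2 := face_mem F2 x2.
  by rewrite -E1 -E2 eqxx in O12.
have cV : #|vertices s| = 2 * #|O1|.
  by rewrite countVB Ebig cardsU disj cards0 subn0 eN addnn mul2n.
have vP : forall v, is_vertex s v -> #|v| = k /\ #|v :&: (O1 :|: O2)| = 1.
  move=> v /imsetP[z _ ->]; split; first by rewrite (card_vertex H) ordk.
  rewrite -Ebig; have [b [zb Pb]] := allT z; have [bb _ _] := Pb.
  have -> : vertex_of s z :&: bigset = [set b]; last by rewrite cards1.
  apply/setP => y; rewrite !inE; apply/andP/eqP => [[zy by_]|->]; last by [].
  by apply: bigU by_ bb _; apply: fctrans (fcsym sI zy) zb.
have fP : forall f, is_face a s f -> f != O1 -> f != O2 -> #|f| = kk.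
  move=> f /imsetP[z _ ->] n1 n2; rewrite (card_face H); apply: nonbig_face.
  apply/negP => bz; have := big_face bz; rewrite EB !inE.
  by rewrite (negbTE n1) (negbTE n2).
have eV := countV; have eF := countF; have eVB := countVB.
rewrite natrB ?max_card // in eF.
rewrite B2 -eVB cV in eF; rewrite cV in eV.
split => ek.
- exists #|O1|, O1, O2; split.
  + by split => //; apply: leq_trans c1.
  + by [].
  + split => //; apply/eqP; rewrite -(eqr_nat rat) natrD; apply/eqP.
    move: eF eV; rewrite /kk ek /= natrM.
    move: (#|faces a s|%:R)%R (#|D|%:R)%R (#|O1|%:R)%R => F N n; lra.
  + by move=> f ff n1 n2; rewrite fP // /kk ek.
  + by move=> v vv; rewrite -ek; apply: vP.
- exists #|O1|, O1, O2; split.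
  + by split => //; apply: leq_trans c1.
  + by [].
  + split => //; apply/eqP; rewrite -(eqr_nat rat) natrD natrM; apply/eqP.
    move: eF eV; rewrite /kk ek /= natrM.
    move: (#|faces a s|%:R)%R (#|D|%:R)%R (#|O1|%:R)%R => F N n; lra.
  + by move=> f ff n1 n2; rewrite fP // /kk ek.
  + by move=> v vv; rewrite -ek; apply: vP.
Qed.

End Glob.

Theorem lemma2p4 (D : finType) (alpha sigma : D -> D) :
  planar_pcc alpha sigma ->
  forall v v' f f' : {set D},
    is_vertex sigma v -> is_vertex sigma v' ->
    is_face alpha sigma f -> is_face alpha sigma f' ->
    incident_face v f -> incident_face v' f' ->
    20 <= #|f| -> 20 <= #|f'| ->
    adjacent alpha v v' ->
    f = f' /\ edge_on_face alpha v v' f.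
Proof.
case=> [[sI [aK [aN [Hc [nl [nm Eu]]]]]] Vc np na].
have H : LH alpha sigma.
  split => // x; (have Vx : is_vertex sigma (vertex_of sigma x) by apply/imsetP; exists x).
  - have [_ +] := Vc _ Vx.
    by rewrite /vertex_of cardsE.
  - by have [+ _] := Vc _ Vx.
move=> v v' f f' Vv Vv' Ff Ff' /existsP[b /andP[bv bf]] /existsP[b' /andP[bv' bf']] c1 c2
  /existsP[d /andP[dv adv']].
have vmem : forall v x, is_vertex sigma v -> x \in v -> v = vertex_of sigma x.
  move=> w x /imsetP[z _ ->]; rewrite inE => zx.
  apply/setP => y; rewrite !inE; apply/idP/idP => h.
    exact: fctrans (fcsym sI zx) h.
  exact: fctrans zx h.
have Ev := vmem _ _ Vv bv; have Ev' := vmem _ _ Vv' bv'.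
have Ef := face_mem H Ff bf; have Ef' := face_mem H Ff' bf'.
have bb : big alpha sigma b by rewrite /Submission.big -(card_face H) Ef.
have bb' : big alpha sigma b' by rewrite /Submission.big -(card_face H) Ef'.
have bd : fconnect sigma b d by move: dv; rewrite Ev inE.
have bd' : fconnect sigma b' (alpha d) by move: adv'; rewrite Ev' inE.
have bigU := big_unique H.
have p_as := p_as H.
have pI := pI H.
have sameface : forall x y, fconnect (phi alpha sigma) x y -> face_of alpha sigma x = face_of alpha sigma y.
  by move=> x y; apply: face_eq.
have bigc : forall x y, fconnect (phi alpha sigma) x y -> big alpha sigma x = big alpha sigma y.
  by move=> x y; apply: big_conn.
have edge : forall x, x \in v -> alpha x \in v' -> (x \in f) || (alpha x \in f) -> edge_on_face alpha v v' f.
  by move=> x xv axv' h; apply/existsP; exists x; rewrite xv axv' h.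
case bdd: (big alpha sigma d).
  have Edb := bigU _ _ bdd bb (fcsym sI bd); subst d.
  have hpb : fconnect sigma b' (phi alpha sigma b) by apply: fctrans bd' (fstep sigma _).
  have bpb : big alpha sigma (phi alpha sigma b) by rewrite -(bigc _ _ (fstep _ b)).
  have Eb' := bigU _ _ bb' bpb hpb.
  split; last by apply: (edge b) => //; rewrite bf.
  by rewrite -Ef -Ef' Eb'; apply: sameface; exact: fstep.
case bsd: (big alpha sigma (sigma d)).
  have Esd := bigU _ _ bsd bb (fcsym sI (fctrans bd (fstep sigma _))).
  have fad : fconnect (phi alpha sigma) (alpha d) b by rewrite -Esd -p_as; exact: fstep.
  have bad' : big alpha sigma (alpha d) by rewrite (bigc _ _ fad).
  have Eb' := bigU _ _ bad' bb' (fcsym sI bd').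
  split; last first.
    by apply: (edge d) => //; rewrite -Ef -(sameface _ _ fad) in_face orbT.
  by rewrite -Ef -Ef' -Eb' (sameface _ _ fad).
case bad: (big alpha sigma (alpha d)).
  have Ead := bigU _ _ bad bb' (fcsym sI bd').
  have fad : fconnect (phi alpha sigma) (alpha d) (sigma d) by rewrite -p_as; exact: fstep.
  have bsd' : big alpha sigma (sigma d) by rewrite -(bigc _ _ fad).
  by rewrite bsd' in bsd.
case bsad: (big alpha sigma (sigma (alpha d))).
  have Esad := bigU _ _ bsad bb' (fcsym sI (fctrans bd' (fstep sigma _))).
  have fd : fconnect (phi alpha sigma) d (sigma (alpha d)) by exact: fstep.
  have bd2 : big alpha sigma d by rewrite (bigc _ _ fd).
  by rewrite bd2 in bdd.
exfalso.
have Bd : Submission.bad alpha sigma d.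
  split; [by exists b; split => //; rewrite fconnect_sym
         | by exists b'; split => //; rewrite fconnect_sym
         | by rewrite bdd bsd | by rewrite bad bsad].
have [k [b0 [k34 Pb0]]] := bad_Pt H Bd.
have [P3 P4] := final H Hc k34 Pb0 Eu.
by case: k34 => ek; [apply: np; apply: P3 | apply: na; apply: P4].
Qed.
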